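(* In the shifted geometric model with $N\ge 2$ total observations and $0<p<1$, with $\hat p_{\mathrm{ml}}=1/(\bar{\bar X}-a+1)$ and $\hat p_{\mathrm b}=\frac{N-1}{N}\hat p_{\mathrm{ml}}$, $$E(\hat p_{\mathrm{ml}})=p\,{}_2F_1(1,1;N+1;1-p)=p+\sum_{k=1}^\infty\frac{p(1-p)^k}{\binom{N+k}{k}},$$ so that $\mathrm{Bias}(\hat p_{\mathrm{ml}})=E(\hat p_{\mathrm{ml}})-p=\sum_{k=1}^\infty\frac{p(1-p)^k}{\binom{N+k}{k}}$ and $\mathrm{Bias}(\hat p_{\mathrm b})=-\frac pN+\frac{N-1}{N}\sum_{k=1}^\infty\frac{p(1-p)^k}{\binom{N+k}{k}}$.
   Context: Model: $X_{ij}$, $i=1,\dots,m$, $j=1,\dots,n_i$, are iid with probability mass function $P(X_{ij}=x)=p(1-p)^{x-a}$, $x=a,a+1,\dots$, $a$ a known integer; $N=\sum_i n_i$, $\bar{\bar X}=\frac1N\sum_{i,j}X_{ij}$. ${}_2F_1(a,b;c;z)=\sum_{k\ge0}\frac{(a)_k(b)_k}{(c)_k}\frac{z^k}{k!}$ with Pochhammer symbol $(x)_k=x(x+1)\cdots(x+k-1)$, $(x)_0=1$. *)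

(* Defs.v *)
From HB Require Import structures.
From mathcomp Require Import all_boot all_order all_algebra.
From mathcomp Require Import all_classical all_reals.
From mathcomp Require Import topology normedtype sequences esum.
Set Implicit Arguments. Unset Strict Implicit. Unset Printing Implicit Defensive.
Import Order.TTheory GRing.Theory Num.Theory.
Import numFieldNormedType.Exports.
Local Open Scope ring_scope.

Section Defs.
Variable R : realType.

Definition pochhammer (x : R) (k : nat) : R := \prod_(i < k) (x + i%:R).

Definition hyp2F1_term (a b c z : R) (k : nat) : R :=
  pochhammer a k * pochhammer b k / pochhammer c k * z ^+ k / (k`!)%:R.

Definition hyp2F1 (a b c z : R) : R := limn (series (hyp2F1_term a b c z)).

(* index set {(i,j) : i < m, j < n_i} of the observations X_ij *)
Definition obs_index (m : nat) (n : 'I_m -> nat) : finType := {i : 'I_m & 'I_(n i)}.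

Definition Ntot (m : nat) (n : 'I_m -> nat) : nat := (\sum_(i < m) n i)%N.

Definition geom_pmf (a : int) (p : R) (x : int) : R :=
  if (a <= x)%R then p * (1 - p) ^+ `|x - a|%N else 0.

Definition sample_pmf (m : nat) (n : 'I_m -> nat) (a : int) (p : R)
  (x : {ffun obs_index n -> int}) : R :=
  \prod_(t : obs_index n) geom_pmf a p (x t).

Definition sample_support (m : nat) (n : 'I_m -> nat) (a : int) :
  set {ffun obs_index n -> int} := [set x | forall t, (a <= x t)%R].

Definition expect (m : nat) (n : 'I_m -> nat) (a : int) (p : R)
  (f : {ffun obs_index n -> int} -> R) : \bar R :=
  (\esum_(x in @sample_support m n a) (@sample_pmf m n a p x * f x)%:E)%R.

Definition grand_mean (m : nat) (n : 'I_m -> nat) (x : {ffun obs_index n -> int}) : R :=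
  (\sum_(t : obs_index n) (x t)%:~R) / (@Ntot m n)%:R.

Definition p_ml (m : nat) (n : 'I_m -> nat) (a : int) (x : {ffun obs_index n -> int}) : R :=
  (@grand_mean m n x - a%:~R + 1)^-1.

Definition p_b (m : nat) (n : 'I_m -> nat) (a : int) (x : {ffun obs_index n -> int}) : R :=
  ((@Ntot m n)%:R - 1) / (@Ntot m n)%:R * @p_ml m n a x.

Definition bias_term (N : nat) (p : R) (k : nat) : R :=
  p * (1 - p) ^+ k / ('C(N + k, k))%:R.

End Defs.

Arguments obs_index {m} n.
Arguments Ntot {m} n.
Arguments sample_pmf {R m} n a p x.
Arguments sample_support {m} n a.
Arguments expect {R m} n a p f.
Arguments grand_mean {R m} n x.
Arguments p_ml {R m} n a x.
Arguments p_b {R m} n a x.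

(* Main.v *)
Require Import Defs.
From HB Require Import structures.
From mathcomp Require Import all_boot all_order all_algebra.
From mathcomp Require Import all_classical all_reals.
From mathcomp Require Import topology normedtype sequences esum.
Import Order.TTheory GRing.Theory Num.Theory.
Import numFieldNormedType.Exports.
From mathcomp Require Import ereal ring lra.
Unset Printing Implicit Defensive.
Local Open Scope classical_set_scope.
Local Open Scope ring_scope.

Section Part1.
Variable R : realType.
Variable p : R.
Hypothesis hp : 0 < p < 1.
Let q := 1 - p.

Lemma q_gt0 : 0 < q. Proof. rewrite /q subr_gt0; by case/andP: hp. Qed.
Lemma p_gt0 : 0 < p. Proof. by case/andP: hp. Qed.
Lemma qn0 : q != 0. Proof. exact: lt0r_neq0 q_gt0. Qed.
Lemma pn0 : p != 0. Proof. exact: lt0r_neq0 p_gt0. Qed.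

Lemma factn0 k : (k`!)%:R != 0 :> R.
Proof. by rewrite pnatr_eq0 -lt0n fact_gt0. Qed.
Lemma natSn0 k : (k.+1)%:R != 0 :> R.
Proof. by rewrite pnatr_eq0. Qed.

Definition u (M k : nat) : R := (k`!)%:R * (M`!)%:R / ((M + k)`!)%:R.
Definition h M k : R := u M k * q ^+ k.
Definition fr (K s : nat) : R := ((K + s)`!)%:R / ((K`!)%:R * (s`!)%:R).

Lemma binr K s : ('C(K + s, K))%:R = fr K s.
Proof.
have := bin_fact (leq_addr s K); rewrite addKn => /(congr1 (fun x => x%:R : R)).
rewrite !natrM /fr => <-; field; rewrite ?mulf_neq0 ?factn0 //.
Qed.

Lemma binr' N j : ('C(N + j, j))%:R * u N j = 1.
Proof.
have := bin_fact (leq_addl N j); rewrite addnK => /(congr1 (fun x => x%:R : R)).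
have Cn0 : ('C(N + j, j))%:R != 0 :> R by rewrite pnatr_eq0 -lt0n bin_gt0 leq_addl.
rewrite !natrM /u => <-; field; rewrite ?mulf_neq0 ?factn0 //.
Qed.

Lemma u_ge0 M k : 0 <= u M k.
Proof. by rewrite /u !mulr_ge0 ?invr_ge0 ?ler0n. Qed.

Lemma u_le1 M k : u M k <= 1.
Proof.
have H := binr' M k.
have Hc : 1 <= ('C(M + k, k))%:R :> R by rewrite ler1n bin_gt0 leq_addl.
by have := ler_wpM2r (u_ge0 M k) Hc; rewrite /= mul1r H.
Qed.

Lemma u0 M : u M 0 = 1.
Proof. rewrite /u addn0 fact0 mul1r divff //; exact: factn0. Qed.

Lemma h_cvg M : cvgn (series (h M)).
Proof.
apply: (@series_le_cvg _ _ (geometric 1 q)).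
- by move=> k; rewrite /h mulr_ge0 ?u_ge0 // exprn_ge0 // ltW // q_gt0.
- by move=> k; rewrite /= mul1r exprn_ge0 // ltW // q_gt0.
- move=> k; rewrite /h /= mul1r ler_piMl ?u_le1 //.
  by rewrite exprn_ge0 // ltW // q_gt0.
- apply: cvgP; apply: cvg_geometric_series.
  rewrite ger0_norm ?ltW ?q_gt0 // /q; case/andP: hp => ? ?; lra.
Qed.


Lemma u_rec M k : (0 < M)%N -> u M.+1 k = (M.+1)%:R / M%:R * (u M k - u M k.+1).
Proof.
move=> M0; rewrite /u addSn addnS !factS.
have Mn0 : M%:R != 0 :> R by rewrite pnatr_eq0 -lt0n.
rewrite !natrM; field.
by rewrite ?Mn0 ?factn0 ?natSn0 /= -natrD addrC natr1 pnatr_eq0.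
Qed.

Lemma h_rec M k : (0 < M)%N ->
  h M.+1 k = (M.+1)%:R / M%:R * (h M k - h M k.+1 / q).
Proof.
move=> M0; rewrite /h u_rec // exprS.
have := qn0; move=> qn; field; rewrite qn.
by rewrite pnatr_eq0 -lt0n M0.
Qed.

Lemma ser_shift (f : R^nat) l : series f @ \oo --> l ->
  series (fun k => f k.+1) @ \oo --> l - f 0%N.
Proof.
move=> fl.
have -> : series (fun k => f k.+1) = (fun n => series f n.+1 - f 0%N).
  by apply/funext => n; rewrite /series /= big_nat_recl //= addrAC subrr add0r.
apply: cvgB; last exact: cvg_cst.
by rewrite (cvg_shiftS (series f)).
Qed.

Arguments ser_shift {f l}.
Definition G M := limn (series (h M)).

Lemma h_cvg_to M : series (h M) @ \oo --> G M.
Proof. exact: h_cvg. Qed.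

Lemma G_rec M : (0 < M)%N -> G M.+1 = (M.+1)%:R / M%:R * (G M - (G M - 1) / q).
Proof.
move=> M0; apply: cvg_lim => //.
have -> : h M.+1 = (M.+1)%:R / M%:R *: (h M - (fun k => h M k.+1 / q)).
  by apply/funext => k; rewrite h_rec //.
rewrite seriesZ; apply: cvgZr.
rewrite seriesD seriesN; apply: cvgB; first exact: h_cvg_to.
have -> : (fun k => h M k.+1 / q) = q^-1 *: (fun k => h M k.+1).
  by apply/funext => k /=; rewrite mulrC.
rewrite seriesZ mulrC; apply: cvgZr.
have := ser_shift (h_cvg_to M); rewrite /h u0 expr0 mulr1 => //.
Qed.


Lemma fr_pascal K s : fr K.+1 s.+1 = fr K.+1 s + fr K s.+1.
Proof. by rewrite -!binr !addSn !addnS binS natrD. Qed.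

Lemma fr_ratio K s : (K.+1)%:R * fr K.+1 s = (s.+1)%:R * fr K s.+1.
Proof.
rewrite -!binr -!natrM; congr (_%:R); rewrite addSn addnS mul_bin_left.
by congr (_ * _)%N; rewrite -addnS addKn.
Qed.

Lemma fr0s s : fr 0 s = 1. Proof. by rewrite -binr add0n bin0. Qed.
Lemma frK0 K : fr K 0 = 1. Proof. by rewrite -binr addn0 binn. Qed.
Lemma fr_ge0 K s : 0 <= fr K s. Proof. by rewrite -binr ler0n. Qed.

Definition nb K s : R := fr K s * p ^+ K.+1 * q ^+ s.
Definition ee K s : R := fr K s * (K.+1)%:R / (K.+1 + s)%:R * p ^+ K.+1 * q ^+ s.

Lemma nb_ge0 K s : 0 <= nb K s.
Proof.
rewrite /nb; apply: mulr_ge0; [apply: mulr_ge0; [exact: fr_ge0|]|];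
  apply: exprn_ge0; apply: ltW; [exact: p_gt0|exact: q_gt0].
Qed.

Lemma nb_rec K s : nb K.+1 s.+1 = q * nb K.+1 s + p * nb K s.+1.
Proof. rewrite /nb fr_pascal !exprS. ring. Qed.

Lemma nb_psum K n :
  series (nb K.+1) n.+1 = q * series (nb K.+1) n + p * series (nb K) n.+1.
Proof.
elim: n => [|n IH].
  rewrite /series /= !big_nat1 big_geq // mulr0 add0r /nb !frK0 !expr0 !mulr1.
  by rewrite !mul1r exprS.
rewrite [in RHS](seriesSr (nb K.+1) n) [in RHS](seriesSr (nb K) n.+1).
rewrite (seriesSr (nb K.+1) n.+1) IH nb_rec; ring.
Qed.

Lemma NB K : series (nb K) @ \oo --> (1:R).
Proof.
elim: K => [|K IH].
  have -> : nb 0 = geometric p q.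
    by apply/funext => s; rewrite /nb /= fr0s expr1 mul1r.
  have -> : (1 : R) = p / (1 - q) by rewrite /q opprB addrC subrK divff // pn0.
  apply: cvg_geometric_series.
  rewrite ger0_norm ?ltW ?q_gt0 // /q; case/andP: hp => ? ?; lra.
have Qle n : series (nb K) n <= 1.
  have <- : limn (series (nb K)) = 1 by apply: cvg_lim.
  apply: nondecreasing_cvgn_le; last exact: cvgP IH.
  by apply: nondecreasing_series => k _ _; apply: nb_ge0.
have Pnd : nondecreasing_seq (series (nb K.+1)).
  by apply: nondecreasing_series => k _ _; apply: nb_ge0.
have Ple n : series (nb K.+1) n <= 1.
  elim: n => [|n IHn]; first by rewrite /series /= big_geq.
  rewrite nb_psum; have := Qle n.+1; have := q_gt0; have := p_gt0.
  rewrite /q => ? ? ?; nra.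
have Pc : cvgn (series (nb K.+1)).
  apply: nondecreasing_is_cvgn => //; exists 1 => _ [n _ <-]; exact: Ple.
set L := limn (series (nb K.+1)).
have HL : L = q * L + p.
  have H1 : (fun n => series (nb K.+1) n.+1) @ \oo --> L.
    by rewrite (cvg_shiftS (series (nb K.+1))); exact: Pc.
  have H2 : (fun n => series (nb K.+1) n.+1) @ \oo --> q * L + p.
    have -> : (fun n => series (nb K.+1) n.+1) =
      (fun n => q * series (nb K.+1) n + p * series (nb K) n.+1).
      by apply/funext => n; rewrite nb_psum.
    apply: cvgD; first by apply: cvgMr; exact: Pc.
    rewrite -[X in _ --> X]mulr1; apply: cvgMr.
    by rewrite (cvg_shiftS (series (nb K))).
  exact: (cvg_unique _ H1 H2).
have -> : (1 : R) = L.
  move: HL; rewrite /q => HL.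
  have : p * (L - 1) = 0 by rewrite mulrBr mulr1; lra.
  by move/eqP; rewrite mulf_eq0 (negbTE pn0) /= subr_eq0 => /eqP ->.
exact: Pc.
Qed.


Lemma ee_rec K s : ee K.+1 s =
  ((K.+2)%:R / (K.+1)%:R * (p / q)) * (nb K s.+1 - ee K s.+1).
Proof.
have Hr := fr_ratio K s.
rewrite /ee /nb.
have -> : fr K.+1 s = (s.+1)%:R * fr K s.+1 / (K.+1)%:R.
  by rewrite -Hr mulrC mulKf // natSn0.
rewrite !exprS !addSn !addnS.
rewrite !mulrS natrD.
have qn := qn0.
field; rewrite ?qn /=.
by apply/andP; split; apply: lt0r_neq0; move: (ler0n R K) (ler0n R s); lra.
Qed.


Lemma nb0 K : nb K 0 = p ^+ K.+1.
Proof. by rewrite /nb frK0 expr0 mulr1 mul1r. Qed.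
Lemma ee0 K : ee K 0 = p ^+ K.+1.
Proof.
rewrite /ee frK0 expr0 mulr1 mul1r addn0 divff ?mul1r //; exact: natSn0.
Qed.

Lemma E K : series (ee K) @ \oo --> p * G K.+1.
Proof.
elim: K => [|K IH].
  have -> : ee 0 = p *: h 1.
    apply/funext => s; change (ee 0 s = p * h 1 s).
    rewrite /ee /h /u fr0s /= add1n factS expr1 fact0 muln1 natrM.
    field; rewrite factn0 /=.
    by apply: lt0r_neq0; move: (ler0n R s); lra.
  by rewrite seriesZ; apply: cvgZr; exact: h_cvg_to.
have -> : ee K.+1 = ((K.+2)%:R / (K.+1)%:R * (p / q)) *:
    ((fun s => nb K s.+1) - (fun s => ee K s.+1)).
  by apply/funext => s; rewrite ee_rec.
have -> : p * G K.+2 = ((K.+2)%:R / (K.+1)%:R * (p / q)) *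
    ((1 - nb K 0) - (p * G K.+1 - ee K 0)).
  rewrite G_rec // nb0 ee0 /q.
  have qn := qn0; rewrite /q in qn.
  field; rewrite qn /=; apply: lt0r_neq0; move: (ler0n R K); lra.
rewrite seriesZ; apply: cvgZr.
rewrite seriesD seriesN; apply: cvgB.
  exact: (ser_shift (NB K)).
exact: (ser_shift IH).
Qed.

End Part1.
Section Part2.
Variables (R : realType) (a : int) (p : R) (m : nat) (n : 'I_m -> nat).
Hypothesis hp : 0 < p < 1.
Let q := 1 - p.
Let T := obs_index n.
Let N := Ntot n.

Definition sz (x : {ffun T -> int}) : nat := (\sum_(t : T) absz (x t - a))%N.

Lemma cardT : #|T| = N.
Proof. exact: tagnat.card. Qed.

Lemma pmf_supp x : sample_support n a x -> sample_pmf n a p x = p ^+ N * q ^+ sz x.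
Proof.
move=> hx; rewrite /sample_pmf.
rewrite (eq_bigr (fun t => p * q ^+ absz (x t - a))); last first.
  by move=> t _; rewrite /geom_pmf (hx t).
by rewrite big_split /= prodr_const cardT prodrXr.
Qed.

Lemma xt_eq x t : sample_support n a x -> x t = a + (absz (x t - a))%:Z.
Proof.
move=> hx; rewrite abszE ger0_norm; first by rewrite addrCA subrr addr0.
by rewrite subr_ge0; apply: hx.
Qed.

Lemma pml_supp x : (0 < N)%N -> sample_support n a x ->
  p_ml (R:=R) n a x = N%:R / (sz x + N)%:R.
Proof.
move=> N0 hx; rewrite /p_ml /grand_mean.
have -> : \sum_(t : T) (x t)%:~R = N%:R * a%:~R + (sz x)%:R :> R.
  rewrite (eq_bigr (fun t => a%:~R + (absz (x t - a))%:R)); last first.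
    by move=> t _; rewrite {1}(xt_eq x t hx) intrD.
  by rewrite big_split /= sumr_const cardT mulr_natl natr_sum.
rewrite -/N natrD.
have Nn0 : N%:R != 0 :> R by rewrite pnatr_eq0 -lt0n.
have : 0 < N%:R :> R by rewrite ltr0n.
have : 0 <= (sz x)%:R :> R by rewrite ler0n.
move=> h1 h2.
field.
by rewrite Nn0 andbT; apply: lt0r_neq0; lra.
Qed.


Section Count.
Variables (K s : nat).
Hypothesis hT : #|T| = K.+1.

Let h (i : 'I_K.+1) : T := enum_val (cast_ord (esym hT) i).
Let hinv (y : T) : 'I_K.+1 := cast_ord hT (enum_rank y).

Lemma hK : cancel h hinv.
Proof. by move=> i; rewrite /h /hinv enum_valK cast_ordKV. Qed.
Lemma hinvK : cancel hinv h.
Proof. by move=> y; rewrite /h /hinv cast_ordK enum_rankK. Qed.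

Lemma sum_reidx (G : T -> nat) : (\sum_(y : T) G y = \sum_(i < K.+1) G (h i))%N.
Proof.
rewrite (reindex h) //; exists hinv => y _; [exact: hK| exact: hinvK].
Qed.

Local Notation Tup := ((K.+1).-tuple 'I_s.+1).
Definition Pt : pred Tup := fun t => (\sum_(i <- t) (i : nat) == s)%N.
Definition et (t : Tup) : {ffun T -> int} :=
  [ffun y => a + ((tnth t (hinv y) : nat))%:Z].

Definition Fs : set {ffun T -> int} := [set x | sample_support n a x /\ sz x = s].

Lemma et_bij : set_bij [set` Pt] Fs et.
Proof.
split.
- move=> t /= Pt_t; split.
    by move=> y; rewrite ffunE lerDl.
  rewrite /sz (eq_bigr (fun y => (tnth t (hinv y) : nat))); last first.
    by move=> y _; rewrite ffunE addrAC subrr add0r.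
  rewrite sum_reidx (eq_bigr (fun i => (tnth t i : nat))); last first.
    by move=> i _; rewrite hK.
  by move: Pt_t; rewrite /Pt unfold_in /= big_tuple => /eqP.
- move=> t1 t2 _ _ /ffunP E; apply: eq_from_tnth => i.
  by have := E (h i); rewrite !ffunE hK => /addrI /eqP; rewrite eqz_nat => /eqP /val_inj.
- move=> x [hx sx].
  have le y : (absz (x y - a) < s.+1)%N.
    rewrite ltnS -sx /sz (bigD1 y) //=; exact: leq_addr.
  exists [tuple inord (absz (x (h i) - a)) | i < K.+1].
    rewrite /= /Pt unfold_in /= big_map big_enum /=.
    rewrite (eq_bigr (fun i => absz (x (h i) - a))); last first.
      by move=> i _; rewrite inordK.
    by apply/eqP; rewrite -sx /sz sum_reidx; apply: eq_bigl.
  apply/ffunP => y; rewrite ffunE tnth_mktuple hinvK inordK //.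
  by rewrite -xt_eq.
Qed.

Lemma count_slice (c : R) : 0 <= c ->
  \esum_(x in Fs) (c%:E) = (('C(K + s, K))%:R * c)%:E.
Proof.
move=> c0.
rewrite (reindex_esum [set` Pt] Fs et (fun=> c%:E)); last exact: et_bij.
rewrite esum_fset; [|exact: finite_finset|by move=> *; rewrite lee_fin].
rewrite -(bigfs _ (r := enum {: Tup})) ?enum_uniq //; last first.
  by move=> i _; rewrite mem_enum.
rewrite sumEFin big_enum_cond /= sumr_const.
rewrite -card_ord_partitions mulr_natl; congr (_%:E); congr (_ *+ _).
apply: eq_card => t; by rewrite inE.
Qed.

End Count.


Lemma pq_ge0 s : 0 <= p ^+ N * q ^+ s.
Proof.
case/andP: hp => p0 p1; apply: mulr_ge0; apply: exprn_ge0; first exact: ltW.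
by rewrite /q subr_ge0; exact: ltW.
Qed.

Lemma expect_g (f : {ffun T -> int} -> R) (g : nat -> R) K : N = K.+1 ->
  (forall s, 0 <= g s) ->
  (forall x, sample_support n a x -> f x = g (sz x)) ->
  expect n a p f = (\sum_(s <oo) (('C(K + s, K))%:R * (p ^+ N * q ^+ s * g s))%:E)%E.
Proof.
move=> hN g0 hf; rewrite /expect.
have SF : sample_support n a = \bigcup_(s in setT) Fs s.
  apply/seteqP; split => [x Sx|x [s _ [Sx _]]] //=; by exists (sz x).
rewrite SF esum_bigcup; first last.
- move=> x [s _ [Sx sx]]; rewrite lee_fin pmf_supp // hf //.
  by rewrite mulr_ge0 // pq_ge0.
- by move=> i j _ _ [x [[_ <-] [_ <-]]].
rewrite -nneseries_esumT; last first.
  move=> s; apply: esum_ge0 => x [Sx sx]; rewrite lee_fin pmf_supp // hf //.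
  by rewrite mulr_ge0 // pq_ge0.
apply: eq_eseriesr => s _.
rewrite (eq_esum (b := fun=> (p ^+ N * q ^+ s * g s)%:E)); last first.
  by move=> x [Sx <-]; rewrite pmf_supp // hf.
apply: count_slice; first by rewrite cardT.
by rewrite mulr_ge0 // pq_ge0.
Qed.

End Part2.

Section Part3.
Variable R : realType.

Lemma eseries_EFin (u : R^nat) l : series u @ \oo --> l ->
  (\sum_(k <oo) (u k)%:E)%E = l%:E.
Proof.
move=> ul.
have -> : (fun n => \sum_(0 <= k < n) (u k)%:E)%E = (EFin \o series u).
  by apply/funext => k; rewrite /= sumEFin.
by rewrite EFin_lim ?(cvg_lim _ ul) //; exact: cvgP ul.
Qed.

Lemma poch1 k : pochhammer 1 k = (k`!)%:R :> R.
Proof.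
elim: k => [|k IH]; first by rewrite /pochhammer big_ord0 fact0.
by rewrite /pochhammer big_ord_recr /= -/(pochhammer 1 k) IH factS natrM mulrC addrC natr1.
Qed.

Lemma pochN N k : pochhammer (N.+1)%:R k * (N`!)%:R = ((N + k)`!)%:R :> R.
Proof.
elim: k => [|k IH]; first by rewrite /pochhammer big_ord0 mul1r addn0.
rewrite /pochhammer big_ord_recr /= -/(pochhammer (N.+1)%:R k).
by rewrite mulrAC IH addnS factS natrM mulrC -natrD addSn.
Qed.

Lemma hyp_term_h (p : R) N : hyp2F1_term 1 1 (N.+1)%:R (1 - p) = h R p N.
Proof.
apply/funext => k; rewrite /hyp2F1_term /h /u !poch1.
have pc : pochhammer (N.+1)%:R k = ((N + k)`!)%:R / (N`!)%:R :> R.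
  by rewrite -pochN mulfK // factn0.
rewrite pc; field; by rewrite !factn0.
Qed.

End Part3.

Theorem mainTheorem4 (R : realType) (a : int) (p : R) (m : nat) (n : 'I_m -> nat) :
  (2 <= Ntot n)%N -> 0 < p < 1 ->
  (cvgn (series (hyp2F1_term 1 1 (Ntot n).+1%:R (1 - p))) /\
  [/\ cvgn (series (fun k => bias_term (Ntot n) p k.+1)),
      expect n a p (p_ml n a) = (p * hyp2F1 1 1 (Ntot n).+1%:R (1 - p))%:E,
      p * hyp2F1 1 1 (Ntot n).+1%:R (1 - p)
        = p + limn (series (fun k => bias_term (Ntot n) p k.+1)),
      (expect n a p (p_ml n a) - p%:E)%E
        = (limn (series (fun k => bias_term (Ntot n) p k.+1)))%:E &
      (expect n a p (p_b n a) - p%:E)%E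
        = (- p / (Ntot n)%:R + ((Ntot n)%:R - 1) / (Ntot n)%:R
             * limn (series (fun k => bias_term (Ntot n) p k.+1)))%:E]).
Proof.
move=> N2 hp.
have N0 : (0 < Ntot n)%N by apply: leq_trans N2.
set N := Ntot n in N2 N0 *.
set K := N.-1.
have hN : N = K.+1 by rewrite /K prednK.
have Nn0 : N%:R != 0 :> R by rewrite pnatr_eq0 -lt0n.
have Hh : hyp2F1 1 1 N.+1%:R (1 - p) = G R p N by rewrite /hyp2F1 hyp_term_h.
have Hbias : series (fun k => bias_term N p k.+1) @ \oo --> p * (G R p N - 1).
  have -> : (fun k => bias_term N p k.+1) = p *: (fun k => h R p N k.+1).
    apply/funext => k; change (bias_term N p k.+1 = p * h R p N k.+1).
    have Hu := binr' R N k.+1.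
    have Cn0 : ('C(N + k.+1, k.+1))%:R != 0 :> R.
      by rewrite pnatr_eq0 -lt0n bin_gt0 leq_addl.
    rewrite /bias_term /h.
    have -> : u R N k.+1 = (('C(N + k.+1, k.+1))%:R)^-1.
      by apply: (mulfI Cn0); rewrite Hu divff.
    by rewrite [X in _ = p * X]mulrC mulrA.
  rewrite seriesZ; apply: cvgZr.
  by have := ser_shift R _ _ (h_cvg_to R p hp N); rewrite /h u0 expr0 mulr1.
have Hb := cvg_lim (@Rhausdorff R) Hbias.
have Gee (c : R) : (\sum_(s <oo) (('C(K + s, K))%:R *
     (p ^+ N * (1 - p) ^+ s * (c * (N%:R / (s + N)%:R))))%:E)%E
    = (c * (p * G R p N))%:E.
  apply: eseries_EFin.
  have -> : (fun s => ('C(K + s, K))%:R *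
     (p ^+ N * (1 - p) ^+ s * (c * (N%:R / (s + N)%:R)))) = c *: ee R p K.
    apply/funext => s; change (('C(K + s, K))%:R *
     (p ^+ N * (1 - p) ^+ s * (c * (N%:R / (s + N)%:R))) = c * ee R p K s).
    by rewrite /ee binr hN addnC; ring.
  rewrite seriesZ; apply: cvgZr; rewrite hN; exact: E.
have Hml : expect n a p (p_ml n a) = (p * G R p N)%:E.
  rewrite (@expect_g R a p m n hp _ (fun s => 1 * (N%:R / (s + N)%:R)) K hN).
  - by rewrite Gee mul1r.
  - by move=> s; rewrite mul1r divr_ge0 // ler0n.
  - by move=> x hx; rewrite mul1r pml_supp.
have Hpb : expect n a p (p_b n a) = ((N%:R - 1) / N%:R * (p * G R p N))%:E.
  rewrite (@expect_g R a p m n hp _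
     (fun s => (N%:R - 1) / N%:R * (N%:R / (s + N)%:R)) K hN).
  - by rewrite Gee.
  - move=> s; rewrite mulr_ge0 // ?divr_ge0 ?ler0n // subr_ge0 ler1n //.
  - by move=> x hx; rewrite /p_b pml_supp.
split; first by rewrite hyp_term_h; exact: h_cvg.
split.
- exact: cvgP Hbias.
- by rewrite Hml Hh.
- by rewrite Hh Hb; ring.
- by rewrite Hml Hb -EFinB; congr (_%:E); ring.
- rewrite Hpb Hb -EFinB; congr (_%:E); field; exact: Nn0.
Qed.
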